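(* Let $S\in\mathbb{S}^n$ and let $(U,V)\in\mathbb{R}^{n\times n}$ be an invertible matrix with $U\in\mathbb{R}^{n\times d}$, $V\in\mathbb{R}^{n\times(n-d)}$, such that $S=VV^T$ and $\mathbb{S}^n_+\cap S^{\perp}=\{UWU^T:W\in\mathbb{S}^d_+\}$. Let $$X=(U,V)\begin{pmatrix}W&Z\\Z^T&R\end{pmatrix}(U,V)^T$$ with $W\in\mathbb{S}^d_+$, $R\in\mathbb{S}^{n-d}$, $Z\in\mathbb{R}^{d\times(n-d)}$. Then there exist $P\in\mathbb{S}^n_+$ and $\alpha\in\mathbb{R}$ with $X=P+\alpha S$ (i.e. $X\in\mathbb{S}^n_++\operatorname{lin}S$) if and only if $\operatorname{null}W\subseteq\operatorname{null}Z^T$.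
   Context: $\mathbb{S}^n$ denotes real symmetric $n\times n$ matrices with trace inner product, $\mathbb{S}^n_+$ the positive semidefinite cone, $S^{\perp}=\{X\in\mathbb{S}^n:\operatorname{trace}(SX)=0\}$, $\operatorname{lin}S=\{\alpha S:\alpha\in\mathbb{R}\}$. *)

(* Defs.v *)
From mathcomp Require Import all_boot all_order all_algebra.
Set Implicit Arguments. Unset Strict Implicit. Unset Printing Implicit Defensive.
Import Order.TTheory GRing.Theory Num.Theory.
Local Open Scope ring_scope.

Definition sym_mx (R : ringType) (n : nat) (A : 'M[R]_n) : Prop := A^T = A.

Definition psd (R : numDomainType) (n : nat) (A : 'M[R]_n) : Prop :=
  sym_mx A /\ forall x : 'cV[R]_n, 0 <= (x^T *m A *m x) 0 0.

Definition null_sub (R : ringType) (m p k : nat)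
  (A : 'M[R]_(m, k)) (B : 'M[R]_(p, k)) : Prop :=
  forall x : 'cV[R]_k, A *m x = 0 -> B *m x = 0.

(* Main.v *)
Require Import Defs.
From mathcomp Require Import all_boot all_order all_algebra.
From mathcomp Require Import ring lra.
Import Order.TTheory GRing.Theory Num.Theory.
Local Open Scope ring_scope.

Lemma psd_congr (R : rcfType) n k (A : 'M[R]_n) (C : 'M[R]_(n,k)) :
  psd A -> psd (C^T *m A *m C).
Proof.
case=> sA pA; split.
  by rewrite /sym_mx !trmx_mul trmxK sA mulmxA.
move=> x; have := pA (C *m x).
by rewrite trmx_mul !mulmxA.
Qed.

Lemma sq_ge0 (R : rcfType) n (y : 'cV[R]_n) : 0 <= (y^T *m y) 0 0.
Proof.
rewrite mxE; apply: sumr_ge0 => i _; rewrite mxE; nra.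
Qed.

Lemma sq_eq0 (R : rcfType) n (y : 'cV[R]_n) : (y^T *m y) 0 0 = 0 -> y = 0.
Proof.
rewrite mxE => h; apply/matrixP => i j; rewrite (ord1 j) mxE.
have := psumr_eq0P (P := xpredT) (F := fun k => y^T 0 k * y k 0) _ h (i := i).
rewrite mxE; move=> H; have /eqP := H (fun k _ => ltac:(rewrite mxE; nra)) isT.
by rewrite mulf_eq0 orbb => /eqP.
Qed.

Lemma fwd (R : rcfType) d m (W : 'M[R]_d) (Z : 'M[R]_(d, m)) (N : 'M[R]_m) :
  sym_mx W -> psd (block_mx W Z Z^T N) -> null_sub W Z^T.
Proof.
move=> sW [_ hB] x Wx; set y := Z^T *m x.
have hxW : x^T *m W = 0 by rewrite -[W]sW -trmx_mul Wx trmx0.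
have hxZ : x^T *m Z = y^T by rewrite /y trmx_mul trmxK.
have key t : 0 <= 2 * t * (y^T *m y) 0 0 + (y^T *m N *m y) 0 0.
  have := hB (col_mx (t *: x) (Z^T *m x)).
  rewrite tr_col_mx mul_row_block mul_row_col linearZ /=.
  have trZ : (t *: x)^T = t *: x^T by apply/matrixP=> i j; rewrite !mxE.
  rewrite -/y trZ -!scalemxAl hxW hxZ scaler0 add0r mulmxDl -scalemxAl -mulmxA -/y.
  rewrite -[y^T *m Z^T *m x]mulmxA -/y.
  set a := y^T *m y; set b := y^T *m (N *m y).
  rewrite !mxE; lra.
have s0 := @sq_ge0 _ _ y.
case: (ltrgt0P ((y^T *m y) 0 0)) => [sp|sn|e]; [|by rewrite ltNge s0 in sn|exact: (@sq_eq0 _ _ y e)].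
set c := (y^T *m N *m y) 0 0.
have := key (- (1 + `|c|) / (2 * (y^T *m y) 0 0)).
have -> : 2 * (- (1 + `|c|) / (2 * (y^T *m y) 0 0)) * (y^T *m y) 0 0 = - (1 + `|c|).
  by field; rewrite gt_eqF.
rewrite -/c => h; exfalso; have := ler_norm c; lra.
Qed.
Lemma real_aux (R : rcfType) (a b mm s : R) :
  a ^+ 2 <= s -> b ^+ 2 <= s -> - (`|mm| * s) <= a * mm * b.
Proof.
move=> ha hb.
have hs : 0 <= s + a * b by nra.
have hs' : 0 <= s - a * b by nra.
have [h|h] := lerP 0 mm.
  rewrite ger0_norm //; have := mulr_ge0 h hs; nra.
have h' : 0 <= - mm by lra.
rewrite ltr0_norm //; have := mulr_ge0 h' hs'; nra.
Qed.

Lemma sq_le (R : rcfType) n (y : 'cV[R]_n) k : y k 0 ^+ 2 <= (y^T *m y) 0 0.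
Proof.
rewrite mxE (bigD1 k) //= mxE -expr2 lerDl.
by apply: sumr_ge0 => i _; rewrite mxE; nra.
Qed.

Definition cbound (R : rcfType) m (M : 'M[R]_m) : R := \sum_j \sum_i `|M i j|.
Arguments cbound {R m}.

Lemma quad_bound (R : rcfType) m (M : 'M[R]_m) (y : 'cV[R]_m) :
  - (cbound M * (y^T *m y) 0 0) <= (y^T *m M *m y) 0 0.
Proof.
have hle := @sq_le _ _ y.
set s := (y^T *m y) 0 0 in hle *.
rewrite /cbound mxE mulr_suml -sumrN; apply: ler_sum => j _.
rewrite mxE mulr_suml mulr_suml -sumrN; apply: ler_sum => i _; rewrite mxE.
exact: real_aux.
Qed.

Lemma colE (R : rcfType) p q r (A : 'M[R]_(p, q)) (B : 'M[R]_(q, r)) i j :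
  (A *m B) i j = (A *m col j B) i 0.
Proof. by rewrite !mxE; apply: eq_bigr => k _; rewrite !mxE. Qed.

Lemma getK (R : rcfType) d m (W : 'M[R]_d) (Z : 'M[R]_(d, m)) :
  null_sub W Z^T -> exists K : 'M[R]_(m, d), Z^T = K *m W.
Proof.
move=> h.
have : (Z^T <= W)%MS.
  rewrite submxE; apply/eqP/matrixP => i j.
  have hW : W *m col j (cokermx W) = 0.
    apply/matrixP => a b; rewrite (ord1 b) -colE mulmx_coker !mxE //.
  by rewrite colE (h _ hW) !mxE.
by case/submxP => K hK; exists K.
Qed.

Lemma psd_bdiag (R : rcfType) d m (W : 'M[R]_d) (M : 'M[R]_m) :
  psd W -> psd M -> psd (block_mx W 0 0 M).
Proof.
case=> sW pW [sM pM]; split.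
  by rewrite /sym_mx tr_block_mx sW sM !trmx0.
move=> x; rewrite -[x]vsubmxK tr_col_mx mul_row_block !mulmx0 addr0 add0r.
rewrite mul_row_col mxE; apply: addr_ge0; [exact: pW | exact: pM].
Qed.

Lemma bwd (R : rcfType) d m (W : 'M[R]_d) (Z : 'M[R]_(d, m)) (Rm : 'M[R]_m) :
  psd W -> sym_mx Rm -> null_sub W Z^T ->
  exists alpha : R, psd (block_mx W Z Z^T (Rm - alpha%:M)).
Proof.
move=> pW sR hn; have sW := pW.1.
case: (getK _ _ _ _ _ hn) => K' hK; set K := K'^T.
have hZ : Z = W *m K by rewrite -[Z]trmxK hK trmx_mul sW.
have hZT : Z^T = K^T *m W by rewrite /K trmxK.
set M0 := Rm - K^T *m W *m K.
exists (- cbound M0).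
have pM1 : psd (M0 + (cbound M0)%:M).
  split.
    rewrite /sym_mx linearD /= tr_scalar_mx /M0 linearB /= !trmx_mul trmxK sW sR.
    by rewrite mulmxA.
  move=> y; rewrite mulmxDr mulmxDl mul_mx_scalar -scalemxAl.
  have := @quad_bound _ _ M0 y; have := @sq_ge0 _ _ y.
  move: (y^T *m M0 *m y) (y^T *m y) => A B; rewrite !mxE; lra.
have := @psd_congr _ _ _ _ (block_mx 1%:M K 0 1%:M) (@psd_bdiag _ _ _ _ _ pW pM1).
congr psd.
rewrite tr_block_mx !trmx1 trmx0 !mulmx_block.
rewrite !mulmx0 !mul0mx !mulmx1 !mul1mx !addr0 !add0r.
have e : Z^T *m K = K^T *m W *m K by rewrite hZT.
rewrite -hZ -hZT /M0 e raddfN opprK.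
by rewrite addrA [X in X + _]addrC subrK.
Qed.

Theorem lemma9 (R : rcfType) (d m : nat)
  (S : 'M[R]_(d + m)) (U : 'M[R]_(d + m, d)) (V : 'M[R]_(d + m, m))
  (W : 'M[R]_d) (Z : 'M[R]_(d, m)) (Rm : 'M[R]_m) :
  sym_mx S ->
  row_mx U V \in unitmx ->
  S = V *m V^T ->
  (forall Y : 'M[R]_(d + m),
     (psd Y /\ \tr (S *m Y) = 0) <->
     (exists W' : 'M[R]_d, psd W' /\ Y = U *m W' *m U^T)) ->
  psd W -> sym_mx Rm ->
  (exists (P : 'M[R]_(d + m)) (alpha : R),
     psd P /\
     row_mx U V *m block_mx W Z Z^T Rm *m (row_mx U V)^T = P + alpha *: S)
  <-> null_sub W Z^T.
Proof.
move=> sS uT hS _ pW sR.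
set T := row_mx U V.
set D : 'M[R]_(d + m) := block_mx 0 0 0 1%:M.
have hSD : S = T *m D *m T^T.
  rewrite hS /T /D mul_row_block !mulmx0 !mulmx1 !addr0 add0r tr_row_mx mul_row_col.
  by rewrite mul0mx add0r.
have hX a : T *m block_mx W Z Z^T Rm *m T^T =
    T *m block_mx W Z Z^T (Rm - a%:M) *m T^T + a *: S.
  have hB : block_mx W Z Z^T Rm = block_mx W Z Z^T (Rm - a%:M) + a *: D.
    by rewrite /D scale_block_mx add_block_mx !scaler0 !addr0 scalemx1 subrK.
  by rewrite {1}hB mulmxDr mulmxDl hSD -scalemxAr -scalemxAl.
split.
  case=> P [a [pP eq]].
  apply: (@fwd _ _ _ W Z (Rm - a%:M) pW.1).
  have eP : P = T *m block_mx W Z Z^T (Rm - a%:M) *m T^T.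
    by apply: (addIr (a *: S)); rewrite -eq (hX a).
  have := @psd_congr _ _ _ _ ((invmx T)^T) pP; rewrite trmxK eP.
  congr psd.
  by rewrite !mulmxA mulVmx // mul1mx -mulmxA -trmx_mul mulVmx // trmx1 mulmx1.
move=> hn; case: (@bwd _ _ _ W Z Rm pW sR hn) => a pB.
exists (T *m block_mx W Z Z^T (Rm - a%:M) *m T^T), a; split; last exact: hX.
by have := @psd_congr _ _ _ _ T^T pB; rewrite trmxK.
Qed.
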